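(* For every $n\geq 1$, the number of Grand-Dyck paths of semilength $n$ starting with an up step and avoiding the pattern $DUD$ equals the coefficient of $z^n$ in $\frac{1-3z-\sqrt{1-2z-3z^2}}{6z-2}$, i.e. the $n$-th term of OEIS sequence A005773 ($1,1,2,5,13,35,96,\dots$ indexed from $n=0$).
   Context: A Grand-Dyck path of semilength $n$ starting with an up step is a word with exactly $n$ letters $U$ and $n$ letters $D$ whose first letter is $U$. It avoids the pattern $DUD$ if it has no three consecutive letters equal to $D,U,D$. *)

(* Defs.v *)
From mathcomp Require Import all_boot all_algebra.
Set Implicit Arguments. Unset Strict Implicit. Unset Printing Implicit Defensive.
Import GRing.Theory Num.Theory.

Definition stepU : bool := true.
Definition stepD : bool := false.

Definition grand_dyck_startU (n : nat) (w : seq bool) : bool :=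
  [&& size w == n.*2, count_mem stepU w == n, count_mem stepD w == n
    & head stepD w == stepU].

Definition avoids_DUD (w : seq bool) : bool :=
  ~~ infix [:: stepD; stepU; stepD] w.

Definition num_paths (n : nat) : nat :=
  #|[set t : (n.*2).-tuple bool | grand_dyck_startU n t && avoids_DUD t]|.

Local Open Scope ring_scope.

Definition fps := nat -> rat.

Definition fps_mul (f g : fps) : fps :=
  fun k => \sum_(i < k.+1) f i * g (k - i)%N.

Definition fps_disc : fps :=
  fun k => if k == 0%N then 1 else if k == 1%N then -2 else if k == 2%N then -3 else 0.
Definition fps_num_poly : fps :=
  fun k => if k == 0%N then 1 else if k == 1%N then -3 else 0.
Definition fps_den : fps :=
  fun k => if k == 0%N then -2 else if k == 1%N then 6 else 0.

Definition is_sqrt_disc (s : fps) : Prop :=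
  s 0%N = 1 /\ forall k, fps_mul s s k = fps_disc k.

(* a is the series (1 - 3z - s)/(6z - 2), i.e. (6z - 2) * a = 1 - 3z - s
   (6z-2 is invertible in rat[[z]] since its constant term is -2). *)
Definition is_gf (s a : fps) : Prop :=
  forall k, fps_mul fps_den a k = fps_num_poly k - s k.

(* Main.v *)
Require Import Defs.
From mathcomp Require Import all_boot all_algebra.
From mathcomp Require Import ring lra zify.
Set Implicit Arguments. Unset Strict Implicit. Unset Printing Implicit Defensive.
Import GRing.Theory Num.Theory.

Fixpoint all_words (L : nat) : seq (seq bool) :=
  if L is L'.+1 then map (cons true) (all_words L') ++ map (cons false) (all_words L')
  else [:: [::]].

Lemma mem_map_cons (c : bool) s x :
  (x \in map (cons c) s) = (if x is b :: w then (b == c) && (w \in s) else false).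
Proof.
case: x => [|b w]; first by apply/mapP => -[].
apply/mapP/andP => [[y ys [-> ->]]|[/eqP -> ys]]; first by rewrite eqxx.
by exists w.
Qed.

Lemma mem_all_words L w : (w \in all_words L) = (size w == L).
Proof.
elim: L w => [|L IH] [|b w] //=; rewrite mem_cat !mem_map_cons // IH eqSS. by case: b; rewrite /= ?orbF.
Qed.

Lemma uniq_all_words L : uniq (all_words L).
Proof.
elim: L => [|L IH] //=.
rewrite cat_uniq !map_inj_uniq; try by move=> x y [].
rewrite IH andbT /=; apply/hasPn => x /mapP [y _ ->]; by rewrite mem_map_cons.
Qed.

Lemma card_words L (Q : pred (seq bool)) :
  #|[set t : L.-tuple bool | Q t]| = count Q (all_words L).
Proof.
rewrite cardE /enum_mem size_filter.
rewrite (eq_count (a2 := fun t : L.-tuple bool => Q t)); last by move=> t; rewrite /= inE.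
rewrite -(count_map val Q).
apply/permP/uniq_perm.
- rewrite map_inj_uniq; [rewrite -enumT; exact: enum_uniq | exact: val_inj].
- exact: uniq_all_words.
move=> x; rewrite mem_all_words; apply/mapP/idP => [[t _ ->]|H].
  by rewrite size_tuple.
by exists (Tuple H) => //; rewrite -enumT mem_enum.
Qed.
Definition cnt (P : pred (seq bool)) u d :=
  count (fun w => [&& P w, count_mem true w == u & count_mem false w == d]) (all_words (u + d)).

Lemma count_all_words_S L (Q : pred (seq bool)) :
  count Q (all_words L.+1) =
  count (fun w => Q (true :: w)) (all_words L) + count (fun w => Q (false :: w)) (all_words L).
Proof. by rewrite /= count_cat !count_map. Qed.

Lemma cnt0 P : cnt P 0 0 = P [::].
Proof. by rewrite /cnt /=; case: (P [::]). Qed.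

Lemma cnt_eq P P' u d : P =1 P' -> cnt P u d = cnt P' u d.
Proof. by move=> H; apply: eq_count => w; rewrite H. Qed.

Lemma cnt_false u d : cnt (fun _ => false) u d = 0.
Proof. by rewrite /cnt; apply/eqP; rewrite -leqn0 leqNgt -has_count; apply/hasPn. Qed.

Lemma cntSU P u d : cnt P u.+1 d = cnt (fun w => P (true::w)) u d +
   (if d is d'.+1 then cnt (fun w => P (false :: w)) u.+1 d' else 0).
Proof.
rewrite /cnt addSn count_all_words_S; congr (_ + _).
case: d => [|d].
  rewrite (eq_count (a2 := pred0)) ?count_pred0 // => w /=.
  by rewrite ?add0n ?add1n /= ?andbF.
rewrite addnS -addSn; apply: eq_count => w /=.
by rewrite add0n add1n eqSS.
Qed.

Lemma cntSD P u d : cnt P u d.+1 =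
   (if u is u'.+1 then cnt (fun w => P (true::w)) u' d.+1 else 0) +
   cnt (fun w => P (false :: w)) u d.
Proof.
rewrite /cnt addnS count_all_words_S; congr (_ + _).
case: u => [|u].
  rewrite (eq_count (a2 := pred0)) ?count_pred0 // => w /=.
  by rewrite ?add0n ?add1n /= ?andbF.
rewrite addSn -addnS; apply: eq_count => w /=.
by rewrite add0n add1n eqSS.
Qed.

Lemma count_add3 (T : Type) (p p1 p2 p3 : pred T) s :
  (forall x, (p x : nat) = p1 x + p2 x + p3 x) ->
  count p s = count p1 s + count p2 s + count p3 s.
Proof. move=> H; elim: s => //= x s ->; rewrite H; lia. Qed.

Lemma cnt_add3 (P P1 P2 P3 : pred (seq bool)) u d :
  (forall w, (P w : nat) = P1 w + P2 w + P3 w) ->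
  cnt P u d = cnt P1 u d + cnt P2 u d + cnt P3 u d.
Proof.
move=> H; rewrite /cnt; apply: count_add3 => w.
by case: (_ == u); case: (_ == d); rewrite /= ?andbT ?andbF ?H.
Qed.

Definition av (w : seq bool) := avoids_DUD w.
Definition isE (w : seq bool) := if w is [::] then true else false.
Definition isD (w : seq bool) := if w is false :: _ then true else false.
Definition isUD (w : seq bool) := if w is true :: false :: _ then true else false.
Definition isUU (w : seq bool) :=
  match w with true :: [::] => true | true :: true :: _ => true | _ => false end.

Lemma av_true w : av (true :: w) = av w.
Proof. by []. Qed.

Lemma av_false w : av (false :: w) = av w && ~~ isUD w.
Proof.
rewrite /av /avoids_DUD /=.
case: w => [|[] [|[] w]] //=; by rewrite ?andbT ?andbF ?prefix0s.
Qed.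

Definition cE := cnt (fun w => av w && isE w).
Definition cD := cnt (fun w => av w && isD w).
Definition cUD := cnt (fun w => av w && isUD w).
Definition cUU := cnt (fun w => av w && isUU w).

Lemma cntF (P : pred (seq bool)) u d : (forall w, P w = false) -> cnt P u d = 0.
Proof. by move=> H; rewrite (cnt_eq (P' := fun _ => false)) ?cnt_false. Qed.

Lemma cE_val u d : cE u d = ((u == 0) && (d == 0)).
Proof.
case: u => [|u]; case: d => [|d].
- by rewrite /cE cnt0.
- by rewrite /cE cntSD /= cntF // => w; rewrite andbF.
- by rewrite /cE cntSU /= cntF // => w; rewrite andbF.
- by rewrite /cE cntSU /= !cntF // => w; rewrite andbF.
Qed.

Ltac shapes := let w := fresh "w" in intro w; rewrite ?av_false ?av_true;
  destruct w as [|[] [|[] w]]; simpl; by rewrite ?andbT ?andbF ?addn0 ?add0n.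

Lemma cD0 u : cD u 0 = 0.
Proof. case: u => [|u]; first by rewrite /cD cnt0.
by rewrite /cD cntSU addn0 cntF // => w; rewrite andbF. Qed.

Lemma cD_S u d : cD u d.+1 = cE u d + cD u d + cUU u d.
Proof.
rewrite /cD cntSD.
have -> : (if u is u'.+1 then cnt (fun w => av (true::w) && isD (true::w)) u' d.+1 else 0) = 0.
  by case: u => // u; rewrite cntF // => w; rewrite andbF.
rewrite add0n; apply: cnt_add3; shapes.
Qed.

Lemma cUD0 d : cUD 0 d = 0.
Proof. case: d => [|d]; first by rewrite /cUD cnt0.
by rewrite /cUD cntSD add0n cntF // => w; rewrite andbF. Qed.

Lemma cUD_S u d : cUD u.+1 d = cD u d.
Proof.
rewrite /cUD cntSU.
have -> : (if d is d'.+1 then cnt (fun w => av (false::w) && isUD (false::w)) u.+1 d' else 0) = 0.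
  by case: d => // d; rewrite cntF // => w; rewrite andbF.
rewrite addn0; apply: cnt_eq; shapes.
Qed.

Lemma cUU0 d : cUU 0 d = 0.
Proof. case: d => [|d]; first by rewrite /cUU cnt0.
by rewrite /cUU cntSD add0n cntF // => w; rewrite andbF. Qed.

Lemma cUU_S u d : cUU u.+1 d = cE u d + cUU u d + cUD u d.
Proof.
rewrite /cUU cntSU.
have -> : (if d is d'.+1 then cnt (fun w => av (false::w) && isUU (false::w)) u.+1 d' else 0) = 0.
  by case: d => // d; rewrite cntF // => w; rewrite andbF.
rewrite addn0; apply: cnt_add3; shapes.
Qed.

Lemma num_paths_cnt n : num_paths n = cUD n n + cUU n n.
Proof.
rewrite /num_paths (card_words _ (fun w => grand_dyck_startU n w && avoids_DUD w)) -addnn.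
have -> : cUD n n + cUU n n = cUD n n + cUU n n + cnt (fun _ => false) n n by rewrite cnt_false addn0.
rewrite /cUD /cUU -(@cnt_add3 (fun w => av w && head false w)); last by shapes.
rewrite /cnt; apply: eq_in_count => w; rewrite mem_all_words => /eqP Hs.
rewrite /grand_dyck_startU /stepU /stepD Hs addnn eqxx /=.
rewrite /av eqb_id; case: (head false w); case: (avoids_DUD w); case: (_ == n); case: (_ == n); by [].
Qed.

Definition Pf u d := \sum_(k < d.+1) 'C(d,k) * 'C(u - k, k).
Definition Rf u d := \sum_(k < d.+1) 'C(d,k) * 'C(u - k, k.+1).
Definition Fs m := \sum_(k < m.+1) 'C(m,k) * 'C(m.+1 - k, k.+1).

Lemma Pf0d d : Pf 0 d = 1.
Proof.
rewrite /Pf big_ord_recl /= bin0 sub0n bin0 big1 // => i _.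
by rewrite sub0n bin0n muln0.
Qed.

Lemma Rf0d d : Rf 0 d = 0.
Proof. by rewrite /Rf big1 // => i _; rewrite sub0n bin0n muln0. Qed.

Lemma Pfu0 u : Pf u 0 = 1.
Proof. by rewrite /Pf big_ord1 /= !bin0. Qed.

Lemma Rf_S v e : Rf v.+1 e = Rf v e + Pf v e.
Proof.
rewrite /Rf /Pf -big_split; apply: eq_bigr => k _ /=; rewrite -mulnDr; congr (_ * _).
case: (leqP k v) => h.
  by rewrite subSn // binS addnC.
have -> : v.+1 - k = 0 by lia.
have -> : v - k = 0 by lia.
by rewrite !bin0n /=; move: h; case: (nat_of_ord k).
Qed.

Lemma Pf_S v e : Pf v.+1 e.+1 = Pf v.+1 e + Rf v e.
Proof.
rewrite /Pf /Rf big_ord_recl [in RHS]big_ord_recl /= !bin0.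
under eq_bigr do rewrite /bump /= !add1n binS subSS mulnDl.
under [\sum_(i < e) _]eq_bigr do rewrite /bump /= !add1n subSS.
have H : \sum_(i < e.+1) 'C(e, i.+1) * 'C(v - i, i.+1) = \sum_(i < e) 'C(e, i.+1) * 'C(v - i, i.+1).
  by rewrite big_ord_recr /= bin_small ?mul0n ?addn0.
by rewrite big_split H addnA.
Qed.


Lemma cUU_lvl e : (forall u, cD u e.+1 = Pf u e) -> forall u, cUU u.+1 e.+1 = Rf u e.
Proof.
move=> HD; elim => [|u IH].
  by rewrite cUU_S cE_val cUU0 cUD0 Rf0d.
by rewrite cUU_S cE_val IH cUD_S HD Rf_S andFb add0n.
Qed.

Lemma cUU_d0 u : cUU u.+1 0 = 1.
Proof.
elim: u => [|u IH]; first by rewrite cUU_S cE_val cUU0 cUD0.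
by rewrite cUU_S cE_val IH cUD_S cD0 andFb.
Qed.

Lemma cD_closed d u : cD u d.+1 = Pf u d.
Proof.
elim: d u => [|d IH] u.
  rewrite cD_S cE_val cD0 Pfu0; case: u => [|u]; first by rewrite cUU0.
  by rewrite cUU_d0 andFb.
rewrite cD_S cE_val IH andbF add0n; case: u => [|u]; first by rewrite cUU0 !Pf0d.
by rewrite (cUU_lvl IH) Pf_S.
Qed.

Lemma Fs_term m k : (k < m.+1)%N ->
  ('C(m,k) * 'C(m - k, k) + 'C(m,k) * 'C(m - k, k.+1) = 'C(m,k) * 'C(m.+1 - k, k.+1))%N.
Proof. move=> km; rewrite -mulnDr subSn; last by rewrite -ltnS. by rewrite binS addnC. Qed.

Lemma num_paths_Fs m : num_paths m.+1 = Fs m.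
Proof.
rewrite num_paths_cnt cUD_S cD_closed (cUU_lvl (cD_closed m)).
rewrite /Pf /Rf /Fs -big_split.
by apply: eq_bigr => k _; apply: Fs_term.
Qed.

Local Open Scope ring_scope.

Definition tr N (f : fps) : {poly rat} := \poly_(i < N) f i.
Definition zm N (p : {poly rat}) := forall k, (k < N)%N -> p`_k = 0.

Lemma coef_tr N f k : (k < N)%N -> (tr N f)`_k = f k.
Proof. by rewrite coef_poly => ->. Qed.

Lemma coef_trM N f g k : (k < N)%N -> (tr N f * tr N g)`_k = fps_mul f g k.
Proof.
move=> kN; rewrite coefM /fps_mul; apply: eq_bigr => i _.
rewrite !coef_tr //; [lia|].
by have := ltn_ord i; lia.
Qed.

Lemma zmD N p q : zm N p -> zm N q -> zm N (p + q).
Proof. by move=> Hp Hq k kN; rewrite coefD Hp ?Hq ?addr0. Qed.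

Lemma zmN N p : zm N p -> zm N (- p).
Proof. by move=> Hp k kN; rewrite coefN Hp ?oppr0. Qed.

Lemma zmM N r p : zm N p -> zm N (r * p).
Proof.
move=> Hp k kN; rewrite coefM big1 // => i _; rewrite Hp ?mulr0 //; lia.
Qed.

Lemma zm_le M N p : zm N p -> (M <= N)%N -> zm M p.
Proof. by move=> Hp MN k kM; apply: Hp; lia. Qed.

Lemma zm_deriv N p : zm N.+1 p -> zm N p^`().
Proof. by move=> Hp k kN; rewrite coef_deriv Hp ?mul0rn. Qed.

Lemma zm_eq N p q : p = q -> zm N p -> zm N q.
Proof. by move=> ->. Qed.

Definition X3 : {poly rat} := 1 - 'X *+ 3.

Lemma coefX3M p k : (X3 * p)`_k = p`_k - (if k is j.+1 then p`_j else 0) *+ 3.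
Proof.
rewrite /X3 mulrBl mul1r mulrnAl coefB coefMn coefXM.
by case: k.
Qed.

Lemma zm_cancel N p : zm N (X3 * p) -> zm N p.
Proof.
move=> H k; elim: k => [|k IH] kN.
  by have := H 0%N kN; rewrite coefX3M subr0.
have := H k.+1 kN; rewrite coefX3M IH ?mul0rn ?subr0 //; lia.
Qed.

Definition Dp : {poly rat} := 1 - 'X *+ 2 - 'X^2 *+ 3.
Definition Den : {poly rat} := 'X *+ 6 - 1 *+ 2.

Lemma coef_Dp k : Dp`_k = fps_disc k.
Proof.
rewrite /Dp !coefB !coefMn coef1 coefX coefXn /fps_disc.
by case: k => [|[|[|k]]] /=; rewrite ?mul0rn ?subr0 ?sub0r //.
Qed.

Lemma tr_den N : (1 < N)%N -> tr N fps_den = Den.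
Proof.
move=> HN; apply/polyP => i; rewrite coef_poly /Den coefB !coefMn coefX coef1 /fps_den.
case: i => [|[|i]] /=; rewrite ?HN ?(ltnW HN) ?mul0rn ?sub0r ?subr0 //.
by case: ifP.
Qed.

Lemma Dp_fact : Dp = X3 * (1 + 'X).
Proof. rewrite /Dp /X3 expr2. ring. Qed.


Lemma coef_X3 k : X3`_k = fps_num_poly k.
Proof.
rewrite /X3 coefB coefMn coef1 coefX /fps_num_poly.
by case: k => [|[|k]] /=; rewrite ?mul0rn ?subr0 ?sub0r.
Qed.

Lemma deriv1P : (1 : {poly rat})^`() = 0.
Proof. by rewrite -polyC1 derivC. Qed.

Lemma a0 s a : is_sqrt_disc s -> is_gf s a -> a 0%N = 0.
Proof.
move=> Hs Ha.
have := Ha 0%N; rewrite /fps_mul big_ord1 /fps_den /fps_num_poly /= (proj1 Hs) subrr.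
by move/eqP; rewrite mulf_eq0 /= => /eqP.
Qed.

Lemma zm_T s a N : is_sqrt_disc s -> is_gf s a -> (0 < N)%N ->
  zm N (Dp * (tr N.+1 a)^`() - (1 + tr N.+1 a *+ 2)).
Proof.
move=> Hs Ha HN.
set S := tr N.+1 s; set A := tr N.+1 a; set C := 1 + A *+ 2.
have H1 : zm N.+1 (S * S - Dp).
  by move=> k kN; rewrite coefB coef_trM // (proj2 Hs) coef_Dp subrr.
have H2 : zm N.+1 (S - X3 * C).
  apply: (@zm_eq _ (Den * A - (X3 - S))); first by rewrite /C /Den /X3; ring.
  move=> k kN; rewrite coefB -(tr_den (N := N.+1)) ?ltnS // coef_trM // Ha.
  by rewrite coefB coef_X3 coef_tr // subrr.
pose Z0 := X3 * C ^+ 2 - (1 + 'X).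
have H3 : zm N.+1 (X3 * Z0).
  apply: (@zm_eq _ ((X3 * C + S) * (- (S - X3 * C)) + (S * S - Dp))).
    by rewrite /Z0 Dp_fact; ring.
  by apply: zmD => //; apply: zmM; apply: zmN.
have H4 := zm_cancel H3.
have H5 := zm_deriv H4.
have dC : C^`() = A^`() *+ 2 by rewrite /C derivD deriv1P derivMn add0r.
have dZ : Z0^`() = - (1 *+ 3) * C ^+ 2 + X3 * (C^`() * C + C * C^`()) - 1.
  rewrite /Z0 /X3 expr2 !(derivB, derivD, derivM, derivMn, derivX, deriv1P).
  ring.
have H6 : zm N ((Dp * A^`() - C) *+ 4).
  apply: (@zm_eq _ ((X3 * C) * Z0^`() + (X3 * C^`() *- 2 + C *+ 3) * Z0)).
    by rewrite dZ dC /Z0 Dp_fact /C /X3; ring.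
  by apply: zmD; apply: zmM => //; apply: zm_le H4 _.
move=> k kN; have := H6 k kN; rewrite coefMn => /eqP.
by rewrite -mulr_natr mulf_eq0 pnatr_eq0 orbF => /eqP.
Qed.

Lemma DpM_eq P : Dp * P = P - ('X * P) *+ 2 - ('X * ('X * P)) *+ 3.
Proof. rewrite /Dp expr2; ring. Qed.

Lemma coef_TT a N k : (k < N.+1)%N ->
  (Dp * (tr N.+2 a)^`() - (1 + tr N.+2 a *+ 2))`_k =
  a k.+1 *+ k.+1 - (if k is j.+1 then a k *+ k else 0) *+ 2
  - (if k is j.+2 then a j.+1 *+ j.+1 else 0) *+ 3 - ((k == 0)%:R + a k *+ 2).
Proof.
move=> kN; rewrite coefB DpM_eq !coefB !coefMn !coefXM coefD coef1 coefMn.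
case: k kN => [|[|k]] kN /=; rewrite ?mul0rn ?subr0 !coef_deriv !coef_tr //; lia.
Qed.

Lemma a_facts s a : is_sqrt_disc s -> is_gf s a ->
  [/\ a 1%N = 1, a 2%N = 2 &
   forall k, a k.+3 *+ k.+3 = a k.+2 *+ (2 * k.+3) + a k.+1 *+ (3 * k.+1)].
Proof.
move=> Hs Ha.
have Z M k : (k < M.+1)%N -> 
  a k.+1 *+ k.+1 - (if k is j.+1 then a k *+ k else 0) *+ 2
  - (if k is j.+2 then a j.+1 *+ j.+1 else 0) *+ 3 - ((k == 0)%:R + a k *+ 2) = 0.
  by move=> kM; rewrite -(coef_TT a kM); exact: (zm_T Hs Ha (ltn0Sn M) kM).
have A0 := a0 Hs Ha.
have A1 : a 1%N = 1.
  have := Z 0%N 0%N isT; rewrite A0 /=.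
  move=> H; apply/eqP; rewrite -subr_eq0 -H; apply/eqP; ring.
have A2 : a 2%N = 2.
  have := Z 1%N 1%N isT; rewrite A1 /=.
  move=> H; lra.
split => // k.
have := Z k.+2 k.+2 (ltnSn _); rewrite /=.
move=> H; apply/eqP; rewrite -subr_eq0 -H; apply/eqP; ring.
Qed.

Definition tterm m j : rat := ('C(m,j) * 'C(m.+1 - j, j.+1))%:R.
Definition Gam m j : rat :=
  if j is i.+1 then - 2 * ((2 * m + 3)%:R - 2 * i%:R) * ('C(m.+1,i) * 'C(m.+1 - i, i.+1))%:R else 0.

Lemma solve_eq (a b c : nat) : (a.+1 * b)%N = c -> (b%:R : rat) = c%:R / a.+1%:R.
Proof.
by move=> <-; rewrite natrM mulrAC mulfV ?mul1r // pnatr_eq0.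
Qed.

Lemma term m j : (m + 3)%:R * tterm m.+2 j - 2 * (m + 3)%:R * tterm m.+1 j - 3 * (m + 1)%:R * tterm m j
   = Gam m j.+1 - Gam m j.
Proof.
rewrite /tterm /Gam.
case: j => [|i].
  rewrite !bin0 !subn0 !bin1; ring.
rewrite !subSS.
case: (ltnP m i) => hmi.
  have z1 : 'C(m.+2 - i, i.+2) = 0%N by apply: bin_small; lia.
  have z2 : 'C(m.+1 - i, i.+2) = 0%N by apply: bin_small; lia.
  have z3 : 'C(m - i, i.+2) = 0%N by apply: bin_small; lia.
  have z4 : 'C(m.+1 - i, i.+1) = 0%N by apply: bin_small; lia.
  rewrite z1 z2 z3 z4 !muln0; ring.
have [r hm] : exists r, m = (i + r)%N by exists (m - i)%N; lia.
have -> : (m.+2 - i = r.+2)%N by lia.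
have -> : (m.+1 - i = r.+1)%N by lia.
have -> : (m - i = r)%N by lia.
case: (ltnP r i) => hri.
  have z1 : 'C(r.+2, i.+2) = 0%N by apply: bin_small; lia.
  have z2 : 'C(r.+1, i.+2) = 0%N by apply: bin_small; lia.
  have z3 : 'C(r, i.+2) = 0%N by apply: bin_small; lia.
  have z4 : 'C(r.+1, i.+1) = 0%N by apply: bin_small; lia.
  rewrite z1 z2 z3 z4 !muln0; ring.
have e4 : ('C(m.+2, i.+1))%:R = (m.+2 * 'C(m.+1, i))%:R / i.+1%:R :> rat.
  by apply: solve_eq; rewrite mul_bin_diag.
have e3 : ('C(m.+1, i))%:R = (m.+1 * 'C(m, i))%:R / r.+1%:R :> rat.
  apply: solve_eq; rewrite (mul_bin_down m.+1 i) /=.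
  by have -> : (m.+1 - i = r.+1)%N by lia.
have e2 : ('C(m.+1, i.+1))%:R = (m.+1 * 'C(m, i))%:R / i.+1%:R :> rat.
  by apply: solve_eq; rewrite (mul_bin_diag m.+1 i).
have e1 : ('C(m, i.+1))%:R = (r * 'C(m, i))%:R / i.+1%:R :> rat.
  apply: solve_eq; rewrite mul_bin_left.
  by have -> : (m - i = r)%N by lia.
have hi1 : i.+1%:R != 0 :> rat by rewrite pnatr_eq0.
have hi2 : i.+2%:R != 0 :> rat by rewrite pnatr_eq0.
have hr1 : r.+1%:R != 0 :> rat by rewrite pnatr_eq0.
case: (eqVneq r i) => [eri|hne].
  subst r.
  have z1 : 'C(i.+1, i.+2) = 0%N by apply: bin_small.
  have z2 : 'C(i, i.+2) = 0%N by apply: bin_small; lia.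
  rewrite z1 z2 !binn !muln0 !muln1.
  rewrite e4 natrM e3 !natrM hm; field; by rewrite addrC natr1 pnatr_eq0.
have [s hs] : exists s, r = (i.+1 + s)%N by exists (r - i.+1)%N; lia.
have f1 : ('C(r, i.+1))%:R = (s.+1 * 'C(r, i))%:R / i.+1%:R :> rat.
  apply: solve_eq; rewrite mul_bin_left.
  by have -> : (r - i = s.+1)%N by lia.
have f2 : ('C(r, i.+2))%:R = (s * 'C(r, i.+1))%:R / i.+2%:R :> rat.
  apply: solve_eq; rewrite mul_bin_left.
  by have -> : (r - i.+1 = s)%N by lia.
have p1 : 'C(r.+2, i.+2)%:R = 'C(r.+1, i.+2)%:R + 'C(r.+1, i.+1)%:R :> rat by rewrite binS natrD.
have p2 : 'C(r.+1, i.+2)%:R = 'C(r, i.+2)%:R + 'C(r, i.+1)%:R :> rat by rewrite binS natrD.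
have p3 : 'C(r.+1, i.+1)%:R = 'C(r, i.+1)%:R + 'C(r, i)%:R :> rat by rewrite binS natrD.
rewrite !natrM e4 natrM e3 natrM e2 e1 !natrM p1 p2 p3 f2 natrM f1 !natrM hm hs.
field.
have pi : 0 <= i%:R :> rat by apply: ler0n.
have ps : 0 <= s%:R :> rat by apply: ler0n.
by apply/and3P; split; apply: lt0r_neq0; lra.
Qed.

Lemma sum_tt m k : \sum_(j < m.+1 + k) tterm m j = (Fs m)%:R.
Proof.
elim: k => [|k IH]; first by rewrite addn0 /Fs natr_sum.
rewrite addnS big_ord_recr IH /tterm bin_small; last by rewrite /=; lia.
by rewrite mul0n /= addr0.
Qed.

Lemma Fs_rec m : ((m + 3) * Fs m.+2 = 2 * (m + 3) * Fs m.+1 + 3 * (m + 1) * Fs m)%N.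
Proof.
have H : \sum_(j < m.+3) ((m + 3)%:R * tterm m.+2 j - 2 * (m + 3)%:R * tterm m.+1 j
     - 3 * (m + 1)%:R * tterm m j) = \sum_(j < m.+3) (Gam m j.+1 - Gam m j).
  by apply: eq_bigr => j _; rewrite term.
rewrite -(big_mkord xpredT (fun j => Gam m j.+1 - Gam m j)) telescope_sumr // in H.
rewrite !sumrB -!mulr_sumr in H.
have s2 : \sum_(j < m.+3) tterm m.+2 j = (Fs m.+2)%:R by rewrite -(sum_tt m.+2 0) addn0.
have s1 : \sum_(j < m.+3) tterm m.+1 j = (Fs m.+1)%:R by rewrite -(sum_tt m.+1 1) addn1.
have s0 : \sum_(j < m.+3) tterm m j = (Fs m)%:R by rewrite -(sum_tt m 2) addn2.
have g0 : Gam m m.+3 = 0 by rewrite /Gam (@bin_small m.+1 m.+2) // mul0n mulr0n mulr0.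
have g00 : Gam m 0 = 0 by [].
rewrite s2 s1 s0 g0 g00 subr0 in H.
move: H; move: (Fs m.+2) (Fs m.+1) (Fs m) => x y z H.
apply/eqP; rewrite -(eqr_nat rat) !natrD !natrM; apply/eqP.
apply: subr0_eq; rewrite -H; ring.
Qed.

Lemma Fs0 : Fs 0 = 1%N.
Proof. by rewrite /Fs big_ord1. Qed.

Lemma Fs1 : Fs 1 = 2%N.
Proof. by rewrite /Fs !big_ord_recr big_ord0. Qed.

Lemma Fs_a s a : is_sqrt_disc s -> is_gf s a -> forall m, (Fs m)%:R = a m.+1.
Proof.
move=> Hs Ha; case: (a_facts Hs Ha) => A1 A2 Arec.
suff H : forall m, (Fs m)%:R = a m.+1 /\ (Fs m.+1)%:R = a m.+2 by move=> m; case: (H m).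
elim => [|k [IH1 IH2]].
  by rewrite A1 A2 Fs0 Fs1.
split; first exact: IH2.
have E := Fs_rec k.
move: E IH1 IH2; move: (Fs k.+2) (Fs k.+1) (Fs k) => x y z E IH1 IH2.
have E' : (k + 3)%:R * x%:R = 2 * (k + 3)%:R * y%:R + 3 * (k + 1)%:R * z%:R :> rat.
  by rewrite -!natrM -natrD E.
rewrite IH1 IH2 in E'.
have nz : (k + 3)%:R != 0 :> rat by rewrite pnatr_eq0 addn3.
apply: (mulfI nz); rewrite E'.
have -> : (k + 3)%:R * a k.+3 = a k.+3 *+ k.+3 by ring.
rewrite Arec; ring.
Qed.

Unset Implicit Arguments.

Theorem corollary1 (s a : fps) :
  is_sqrt_disc s -> is_gf s a ->
  forall n : nat, (1 <= n)%N -> (num_paths n)%:R = a n.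
Proof.
move=> Hs Ha n; case: n => [|m] Hn; first by [].
rewrite num_paths_Fs; exact: (Fs_a Hs Ha m).
Qed.
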